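(* Let $\Omega\subset\mathbb{R}^d$ be open and connected, $m\ge1$, $p\colon\Omega\to[1,2]$ measurable, $X=L^2(\Omega,\mathbb{R}^m)$, $\rho_p(f)=\int_\Omega|f(x)|^{p(x)}\,dx$, and $\tau>0$. Then for every $f\in X$, $$M_\tau(\rho_p)(f)=\int_\Omega T_\tau\big(f(x),p(x)\big)\,dx,$$ where for $z\in\mathbb{R}^m$, $q\in[1,2]$, $$T_\tau(z,q)=\begin{cases}\frac{|z|^2}{2\tau}, & q=1,\ |z|\le\tau,\\ |z|-\frac{\tau}{2}, & q=1,\ |z|\ge\tau,\\ \frac{|z|^2}{1+2\tau}, & q=2,\\ (|z|-\bar\alpha)\,\frac{2\bar\alpha+q(|z|-\bar\alpha)}{2\tau q}, & 1<q<2.\end{cases}$$ Here $\bar\alpha=\bar\alpha(|z|,q,\tau)$ is the unique solution $\alpha\in[0,|z|)$ of $\alpha+\tau q\,\alpha^{q-1}=|z|$ when $z\neq0$, and $\bar\alpha=0$ when $z=0$.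
   Context: $|\cdot|$ is the Euclidean norm on $\mathbb{R}^m$ and $\|\cdot\|_2$ the norm of $X$. The Moreau envelope is $M_\tau(\rho_p)(f)=\inf_{g\in X}\big[\rho_p(g)+\frac{1}{2\tau}\|f-g\|_2^2\big]$. *)

(* Defs.v *)
From HB Require Import structures.
From mathcomp Require Import all_boot all_order all_algebra.
From mathcomp Require Import all_classical all_reals all_analysis.
Set Implicit Arguments. Unset Strict Implicit. Unset Printing Implicit Defensive.
Import Order.TTheory GRing.Theory Num.Theory.
Import numFieldNormedType.Exports.
Local Open Scope classical_set_scope.
Local Open Scope ring_scope.

(* Points of R^d are represented (for measure theory) as d-tuples of reals,
   carrying the library's product (= Borel) sigma-algebra on n.-tuple R. *)

Definition eucl {R : realType} {m : nat} (z : m.-tuple R) : R :=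
  Num.sqrt (\sum_(i < m) (tnth z i) ^+ 2).

Definition tsub {R : realType} {m : nat} (z w : m.-tuple R) : m.-tuple R :=
  [tuple tnth z i - tnth w i | i < m].

Definition rv_of_tuple {R : realType} {d : nat} (t : d.-tuple R) : 'rV[R]_d :=
  \row_(i < d) tnth t i.

(* mu is d-dimensional Lebesgue measure: the product of 1-d Lebesgue
   measures on boxes of measurable sets (this determines it on the product
   sigma-algebra). *)
Definition is_lebesgue_Rd {R : realType} {d : nat}
  (mu : {measure set (d.-tuple R) -> \bar R}) : Prop :=
  forall A : 'I_d -> set R, (forall i, measurable (A i)) ->
    mu [set t | forall i, A i (tnth t i)] = (\prod_(i < d) lebesgue_measure (A i))%E.

(* X = L^2(Omega, R^m) (representatives): measurable, square integrable. *)
Definition inL2 {R : realType} {d m : nat} (mu : {measure set (d.-tuple R) -> \bar R})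
  (D : set (d.-tuple R)) (f : d.-tuple R -> m.-tuple R) : Prop :=
  measurable_fun D f /\
  (\int[mu]_(x in D) ((eucl (f x)) ^+ 2)%:E < +oo)%E.

Definition rho_p {R : realType} {d m : nat} (mu : {measure set (d.-tuple R) -> \bar R})
  (D : set (d.-tuple R)) (p : d.-tuple R -> R) (f : d.-tuple R -> m.-tuple R) : \bar R :=
  (\int[mu]_(x in D) (powR (eucl (f x)) (p x))%:E)%E.

Definition L2sq {R : realType} {d m : nat} (mu : {measure set (d.-tuple R) -> \bar R})
  (D : set (d.-tuple R)) (f g : d.-tuple R -> m.-tuple R) : \bar R :=
  (\int[mu]_(x in D) ((eucl (tsub (f x) (g x))) ^+ 2)%:E)%E.

Definition moreau_rho {R : realType} {d m : nat} (mu : {measure set (d.-tuple R) -> \bar R})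
  (D : set (d.-tuple R)) (p : d.-tuple R -> R) (tau : R)
  (f : d.-tuple R -> m.-tuple R) : \bar R :=
  ereal_inf [set (rho_p mu D p g + ((2 * tau)^-1)%:E * L2sq mu D f g)%E
            | g in [set g | inL2 mu D g]].

Definition alpha_bar {R : realType} (r q tau : R) : R :=
  if r == 0 then 0
  else xget 0 [set a : R | 0 <= a < r /\ a + tau * q * powR a (q - 1) = r].

Definition T_tau {R : realType} {m : nat} (tau : R) (z : m.-tuple R) (q : R) : R :=
  let r := eucl z in
  if q == 1 then (if r <= tau then r ^+ 2 / (2 * tau) else r - tau / 2)
  else if q == 2 then r ^+ 2 / (1 + 2 * tau)
  else let a := alpha_bar r q tau in
       (r - a) * (2 * a + q * (r - a)) / (2 * tau * q).

(* Main.v *)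
Require Import Defs.
From HB Require Import structures.
From mathcomp Require Import all_boot all_order all_algebra.
From mathcomp Require Import all_classical all_reals all_analysis.
From mathcomp Require Import ring lra measurable_realfun.
Import Order.TTheory GRing.Theory Num.Theory.
Import numFieldNormedType.Exports.
Local Open Scope classical_set_scope.
Local Open Scope ring_scope.
Set Implicit Arguments. Unset Strict Implicit. Unset Printing Implicit Defensive.

Lemma tangent_powR (R : realType) (q a b : R) : 1 <= q -> 0 <= a -> 0 <= b ->
  powR a q + q * powR a (q - 1) * (b - a) <= powR b q.
Proof.
move=> q1 a0 b0.
have [->|qn1] := eqVneq q 1.
  rewrite subrr powRr0 !powRr1// mul1r; lra.
have q1' : 1 < q by rewrite lt_neqAle eq_sym qn1.
have q0 : 0 < q by rewrite (lt_trans _ q1').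
have qm0 : 0 < q - 1 by rewrite subr_gt0.
set B := powR a (q - 1).
have B0 : 0 <= B by exact: powR_ge0.
have := @conjugate_powR R b B q (q / (q - 1)) b0 B0 q0 (divr_gt0 q0 qm0).
have hpq : q^-1 + (q / (q - 1))^-1 = 1.
  by rewrite invf_div -{1}(div1r q) -mulrDl subrKC mulfV// gt_eqF.
move=> /(_ hpq).
have -> : powR B (q / (q - 1)) = powR a q.
  by rewrite /B -powRrM mulrC divfK// gt_eqF.
have -> : powR a q = a * B by rewrite /B mulr_powRB1.
move=> H.
have H2 : q * (b * B) <= powR b q + (q - 1) * (a * B).
  have e : q * (powR b q / q + a * B * ((q - 1) / q)) = powR b q + (q - 1) * (a * B).
    by field; rewrite gt_eqF.
  rewrite -e; move: H; by rewrite invf_div ler_pM2l.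
nra.
Qed.

Definition Hq {R : realType} (tau q c : R) : R := c + tau * q * powR c (q - 1).

Lemma Hq_le (R : realType) (tau q u v : R) : 0 < tau -> 1 <= q -> 0 <= u -> u <= v ->
  Hq tau q u <= Hq tau q v.
Proof.
move=> t0 q1 u0 uv; rewrite /Hq lerD// ler_wpM2l//.
  by rewrite mulr_ge0// ltW// (lt_le_trans _ q1).
apply: ge0_ler_powR; rewrite ?nnegrE ?subr_ge0//; exact: le_trans uv.
Qed.

Lemma Hq_lt (R : realType) (tau q u v : R) : 0 < tau -> 1 <= q -> 0 <= u -> u < v ->
  Hq tau q u < Hq tau q v.
Proof.
move=> t0 q1 u0 uv; rewrite /Hq ltr_leD// ler_wpM2l//.
  by rewrite mulr_ge0// ltW// (lt_le_trans _ q1).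
apply: ge0_ler_powR; rewrite ?nnegrE ?subr_ge0// ?ltW//; exact: le_lt_trans uv.
Qed.

Lemma Hq_derivable (R : realType) (tau q x : R) : 0 < x -> derivable (Hq tau q) x 1.
Proof.
move=> x0; apply: derivableD; first exact: derivable_id.
apply: derivableM; first exact: derivable_cst.
by apply: derivable_powR; rewrite in_itv/= andbT.
Qed.

Lemma alpha_bar_spec (R : realType) (r q tau : R) : 0 < tau -> 1 < q -> q <= 2 -> 0 < r ->
  0 <= alpha_bar r q tau < r /\ Hq tau q (alpha_bar r q tau) = r.
Proof.
move=> t0 q1 q2 r0.
rewrite /alpha_bar gt_eqF//.
apply: (@xgetPex _ 0 [set a : R | 0 <= a < r /\ a + tau * q * powR a (q - 1) = r]).
have q0 : 0 < q by rewrite (lt_trans _ q1).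
have qm0 : 0 < q - 1 by rewrite subr_gt0.
have k0 : 0 < 1 + tau * q by rewrite addr_gt0// mulr_gt0.
pose delta := Num.min 1 (r / (2 * (1 + tau * q))).
have d0 : 0 < delta by rewrite lt_min ltr01/= divr_gt0// mulr_gt0.
have d1 : delta <= 1 by rewrite ge_min lexx.
have d2 : delta <= r / (2 * (1 + tau * q)) by rewrite ge_min lexx orbT.
pose eps := powR delta (q - 1)^-1.
have e0 : 0 < eps by rewrite powR_gt0.
have eq1 : powR eps (q - 1) = delta.
  by rewrite /eps -powRrM mulVf ?gt_eqF// powRr1// ltW.
have ed : eps <= delta.
  apply: ge1r_powR; first by rewrite d0 d1.
  by rewrite invf_ge1// ?lerBlDl// addrC -[2]/(1 + 1) lerD.
have Heps : Hq tau q eps < r.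
  rewrite /Hq eq1.
  have : delta * (1 + tau * q) <= r / 2.
    have e : r / (2 * (1 + tau * q)) * (1 + tau * q) = r / 2.
      by field; rewrite gt_eqF.
    rewrite -e; nra.
  have : 0 < r by [].
  nra.
have er : eps < r.
  by rewrite (le_lt_trans _ Heps)// /Hq lerDl mulr_ge0// ?powR_ge0// mulr_ge0// ltW.
have Hr : r < Hq tau q r by rewrite /Hq ltrDl mulr_gt0 ?mulr_gt0// powR_gt0.
have [c cI Hc] : exists2 c, c \in `[eps, r] & Hq tau q c = r.
  apply: IVT; first exact: ltW.
    apply: derivable_within_continuous => x; rewrite in_itv/= => /andP[ex _].
    exact: Hq_derivable (lt_le_trans e0 ex).
  rewrite ge_min le_max (ltW Heps) (ltW Hr) orbT; done.
exists c; split=> //.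
move: cI; rewrite in_itv/= => /andP[ec cr].
rewrite (le_trans (ltW e0))//= lt_neqAle cr andbT.
by apply/negP => /eqP ecr; move: Hc; rewrite ecr => /eqP; rewrite gt_eqF.
Qed.

Definition astar {R : realType} (tau r q : R) : R :=
  if q == 1 then Num.max (r - tau) 0
  else if q == 2 then r / (1 + 2 * tau)
  else alpha_bar r q tau.

Lemma astar_spec (R : realType) (tau r q : R) : 0 < tau -> 0 <= r -> 1 <= q <= 2 ->
  0 <= astar tau r q <= r /\
  (Hq tau q (astar tau r q) = r \/ (astar tau r q = 0 /\ r <= Hq tau q 0)).
Proof.
move=> t0 r0 /andP[q1 q2]; rewrite /astar.
have [->|qn1] := eqVneq q 1.
  rewrite /Hq subrr !powRr0 !mulr1.
  have [rt|rt] := leP r tau.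
    have -> : Num.max (r - tau) 0 = 0 by apply/max_idPr; rewrite subr_le0.
    by rewrite lexx r0; split=> //; right; rewrite add0r.
  have -> : Num.max (r - tau) 0 = r - tau by apply/max_idPl; rewrite subr_ge0 ltW.
  split; first by rewrite subr_ge0 ltW//= gerBl ltW.
  by left; rewrite subrK.
have [->|qn2] := eqVneq q 2.
  have k0 : 0 < 1 + 2 * tau by rewrite addr_gt0// mulr_gt0.
  split.
    apply/andP; split; first exact: divr_ge0 r0 (ltW k0).
    rewrite ler_pdivrMr//; nra.
  left; rewrite /Hq.
  have -> : (2 : R) - 1 = 1 by rewrite -[2]/(1 + 1) addrK.
  rewrite powRr1; last exact: divr_ge0 r0 (ltW k0).
  by field; rewrite gt_eqF.
have q1' : 1 < q by rewrite lt_neqAle eq_sym qn1.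
have [->|rn0] := eqVneq r 0.
  rewrite /alpha_bar eqxx lexx; split=> //; right; split=> //.
  by rewrite /Hq powR0 ?mulr0 ?addr0// subr_eq0.
have r0' : 0 < r by rewrite lt_neqAle eq_sym rn0.
have [/andP[a0 ar] Ha] := alpha_bar_spec t0 q1' q2 r0'.
by rewrite a0 ltW//; split=> //; left.
Qed.

Definition phi {R : realType} (tau q r b : R) : R := powR b q + (r - b) ^+ 2 / (2 * tau).

Lemma astar_min (R : realType) (tau r q b : R) : 0 < tau -> 0 <= r -> 1 <= q <= 2 -> 0 <= b ->
  phi tau q r (astar tau r q) <= phi tau q r b.
Proof.
move=> t0 r0 qI b0.
have [/andP[a0 ar] HH] := astar_spec t0 r0 qI.
move: qI => /andP[q1 q2].
set a := astar tau r q in a0 ar HH *.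
have tg := tangent_powR q1 a0 b0.
set P := powR a (q - 1) in tg HH.
have P0 : 0 <= P by exact: powR_ge0.
have key : r - a <= tau * q * P /\ (tau * q * P = r - a \/ a = 0).
  case: HH => [|[a00 rH]].
    by rewrite /Hq -/P => <-; rewrite addrC addKr; split => //; left.
  move: rH; rewrite /Hq -/P a00 !add0r => rH.
  by rewrite subr0 /P a00; split; [exact: rH | right].
rewrite /phi.
have t2 : 0 < 2 * tau by rewrite mulr_gt0.
rewrite -subr_ge0.
have -> : powR b q + (r - b) ^+ 2 / (2 * tau) - (powR a q + (r - a) ^+ 2 / (2 * tau)) =
  (powR b q - powR a q) + ((r - b) ^+ 2 - (r - a) ^+ 2) / (2 * tau).
  by field; rewrite gt_eqF.
have hb : q * P * (b - a) <= powR b q - powR a q by rewrite lerBrDl.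
case: key => [k1 [k2|k2]].
  have hq : q * P = (r - a) / tau by rewrite -k2; field; rewrite gt_eqF.
  rewrite hq in hb.
  apply: le_trans (lerD hb (lexx _)).
  have -> : (r - a) / tau * (b - a) + ((r - b) ^+ 2 - (r - a) ^+ 2) / (2 * tau) =
     (b - a) ^+ 2 / (2 * tau) by field; rewrite gt_eqF.
  by rewrite divr_ge0 ?sqr_ge0 ?ltW.
move: hb k1; rewrite k2 !subr0 => hb k1.
apply: le_trans (lerD hb (lexx _)).
have -> : q * P * b + ((r - b) ^+ 2 - r ^+ 2) / (2 * tau) =
  ((2 * (tau * q * P - r)) * b + b ^+ 2) / (2 * tau) by field; rewrite gt_eqF.
apply: divr_ge0; last exact: ltW.
by rewrite addr_ge0 ?sqr_ge0// mulr_ge0// mulr_ge0// subr_ge0.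
Qed.

Lemma eucl_ge0 (R : realType) (m : nat) (z : m.-tuple R) : 0 <= eucl z.
Proof. exact: sqrtr_ge0. Qed.

Lemma T_tau_phi (R : realType) (m : nat) (tau : R) (z : m.-tuple R) (q : R) :
  0 < tau -> 1 <= q <= 2 ->
  T_tau tau z q = phi tau q (eucl z) (astar tau (eucl z) q).
Proof.
move=> t0 qI; have := astar_spec t0 (eucl_ge0 z) qI.
move: qI => /andP[q1 q2].
rewrite /T_tau /astar /phi; set r := eucl z => -[/andP[a0 ar] HH].
have r0 : 0 <= r by exact: eucl_ge0.
have t2 : 2 * tau != 0 by rewrite gt_eqF// mulr_gt0.
have [q1e|qn1] := eqVneq q 1.
  rewrite q1e in HH *.
  have [rt|rt] := leP r tau.
    have -> : Num.max (r - tau) 0 = 0 by apply/max_idPr; rewrite subr_le0.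
    by rewrite powR0 ?oner_eq0// add0r subr0.
  have -> : Num.max (r - tau) 0 = r - tau by apply/max_idPl; rewrite subr_ge0 ltW.
  rewrite powRr1 ?subr_ge0 ?ltW//.
  by field; rewrite gt_eqF.
have [q2e|qn2] := eqVneq q 2.
  have k0 : 0 < 1 + 2 * tau by rewrite addr_gt0// mulr_gt0.
  rewrite q2e -[X in powR _ X]/(2%:R) powR_mulrn; last exact: divr_ge0 r0 (ltW k0).
  by field; rewrite (gt_eqF t0) (gt_eqF k0).
have q1' : 1 < q by rewrite lt_neqAle eq_sym qn1.
have q0 : 0 < q by rewrite (lt_trans _ q1').
have [re0|rn0] := eqVneq r 0.
  rewrite re0 /alpha_bar eqxx powR0 ?gt_eqF// subrr expr0n /= !mul0r addr0.
  by [].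
have r0' : 0 < r by rewrite lt_neqAle eq_sym rn0.
have [/andP[a0' ar'] Ha] := alpha_bar_spec t0 q1' q2 r0'.
move: Ha; rewrite /Hq; set a := alpha_bar r q tau => Ha.
rewrite -mulr_powRB1//.
have hP : powR a (q - 1) = (r - a) / (tau * q).
  by rewrite -Ha; field; rewrite ?gt_eqF// mulr_gt0.
rewrite hP.
by field; rewrite ?gt_eqF// mulr_gt0.
Qed.

Definition tsc {R : realType} {m : nat} (c : R) (z : m.-tuple R) : m.-tuple R :=
  [tuple c * tnth z i | i < m].

Lemma eucl_sqr (R : realType) (m : nat) (z : m.-tuple R) :
  eucl z ^+ 2 = \sum_(i < m) tnth z i ^+ 2.
Proof. by rewrite /eucl sqr_sqrtr// sumr_ge0// => i _; exact: sqr_ge0. Qed.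

Lemma sum_sq_split (R : realType) (m : nat) (a b : R) (z w : m.-tuple R) :
  \sum_(i < m) (a * tnth z i - b * tnth w i) ^+ 2 =
  a ^+ 2 * \sum_(i < m) tnth z i ^+ 2 - 2 * a * b * \sum_(i < m) (tnth z i * tnth w i)
  + b ^+ 2 * \sum_(i < m) tnth w i ^+ 2.
Proof.
rewrite !mulr_sumr -sumrB -big_split /=; apply: eq_bigr => i _; ring.
Qed.

Lemma eucl0_tnth (R : realType) (m : nat) (z : m.-tuple R) i :
  eucl z = 0 -> tnth z i = 0.
Proof.
move=> e0; have : \sum_(j < m) tnth z j ^+ 2 = 0 by rewrite -eucl_sqr e0 expr0n.
move/eqP; rewrite psumr_eq0; last by move=> j _; exact: sqr_ge0.
by move/allP/(_ i (mem_index_enum _)) => /=; rewrite sqrf_eq0 => /eqP.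
Qed.

Lemma cauchy_schwarz (R : realType) (m : nat) (z w : m.-tuple R) :
  \sum_(i < m) (tnth z i * tnth w i) <= eucl z * eucl w.
Proof.
have [r0|rn0] := eqVneq (eucl z) 0.
  rewrite r0 mul0r big1// => i _; by rewrite eucl0_tnth// mul0r.
have [s0|sn0] := eqVneq (eucl w) 0.
  rewrite s0 mulr0 big1// => i _; by rewrite (eucl0_tnth i s0) mulr0.
set r := eucl z in rn0 *; set s := eucl w in sn0 *.
have r0 : 0 < r by rewrite lt_neqAle eq_sym rn0 eucl_ge0.
have s0 : 0 < s by rewrite lt_neqAle eq_sym sn0 eucl_ge0.
have := sum_sq_split s r z w.
rewrite -!eucl_sqr -/r -/s.
have : 0 <= \sum_(i < m) (s * tnth z i - r * tnth w i) ^+ 2.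
  by apply: sumr_ge0 => i _; exact: sqr_ge0.
move=> h0 e; rewrite e in h0.
have rs : 0 < r * s by rewrite mulr_gt0.
nra.
Qed.

Lemma eucl_tsub_ge (R : realType) (m : nat) (z w : m.-tuple R) :
  (eucl z - eucl w) ^+ 2 <= eucl (tsub z w) ^+ 2.
Proof.
rewrite eucl_sqr.
have -> : \sum_(i < m) tnth (tsub z w) i ^+ 2 =
          \sum_(i < m) (1 * tnth z i - 1 * tnth w i) ^+ 2.
  by apply: eq_bigr => i _; rewrite /tsub tnth_mktuple !mul1r.
rewrite sum_sq_split -!eucl_sqr.
have := cauchy_schwarz z w; nra.
Qed.

Lemma eucl_tsc (R : realType) (m : nat) (c : R) (z : m.-tuple R) :
  eucl (tsc c z) = `|c| * eucl z.
Proof.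
rewrite /eucl /tsc.
have -> : \sum_(i < m) tnth [tuple c * tnth z i0 | i0 < m] i ^+ 2 =
          c ^+ 2 * \sum_(i < m) tnth z i ^+ 2.
  by rewrite mulr_sumr; apply: eq_bigr => i _; rewrite tnth_mktuple exprMn.
by rewrite sqrtrM ?sqr_ge0// sqrtr_sqr.
Qed.

Lemma tsub_tsc (R : realType) (m : nat) (c : R) (z : m.-tuple R) :
  tsub z (tsc c z) = tsc (1 - c) z.
Proof.
by apply: eq_from_tnth => i; rewrite /tsub /tsc !tnth_mktuple mulrBl mul1r.
Qed.

Lemma pointwise_lb (R : realType) (m : nat) (tau q : R) (z w : m.-tuple R) :
  0 < tau -> 1 <= q <= 2 ->
  T_tau tau z q <= powR (eucl w) q + eucl (tsub z w) ^+ 2 / (2 * tau).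
Proof.
move=> t0 qI; rewrite (T_tau_phi z t0 qI).
apply: le_trans (astar_min t0 (eucl_ge0 z) qI (eucl_ge0 w)) _.
rewrite /phi lerD2l ler_pM2r ?invr_gt0 ?mulr_gt0//.
exact: eucl_tsub_ge.
Qed.

Definition gs {R : realType} {m : nat} (tau : R) (z : m.-tuple R) (q : R) : m.-tuple R :=
  tsc (astar tau (eucl z) q / eucl z) z.

Lemma eucl_gs (R : realType) (m : nat) (tau q : R) (z : m.-tuple R) :
  0 < tau -> 1 <= q <= 2 ->
  eucl (gs tau z q) = astar tau (eucl z) q /\
  eucl (tsub z (gs tau z q)) = eucl z - astar tau (eucl z) q.
Proof.
move=> t0 qI; have [/andP[a0 ar] _] := astar_spec t0 (eucl_ge0 z) qI.
rewrite /gs tsub_tsc !eucl_tsc.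
set r := eucl z in a0 ar *; set a := astar tau r q in a0 ar *.
have [r0|rn0] := eqVneq r 0.
  have a00 : a = 0 by apply/eqP; rewrite eq_le a0 andbT -r0.
  by rewrite r0 a00 !mulr0 subr0.
have rp : 0 < r by rewrite lt_neqAle eq_sym rn0 eucl_ge0.
rewrite (ger0_norm (divr_ge0 a0 (ltW rp))) ger0_norm; last first.
  by rewrite subr_ge0 ler_pdivrMr// mul1r.
split; first by rewrite divfK.
by rewrite mulrBl mul1r divfK.
Qed.

Lemma pointwise_eq (R : realType) (m : nat) (tau q : R) (z : m.-tuple R) :
  0 < tau -> 1 <= q <= 2 ->
  T_tau tau z q = powR (eucl (gs tau z q)) q + eucl (tsub z (gs tau z q)) ^+ 2 / (2 * tau).
Proof.
move=> t0 qI; have [-> ->] := eucl_gs z t0 qI.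
by rewrite (T_tau_phi z t0 qI).
Qed.

Lemma astar_lt (R : realType) (tau r q c : R) : 0 < tau -> 0 <= r -> 1 <= q <= 2 -> 0 < c ->
  (astar tau r q < c) = (r < Hq tau q c).
Proof.
move=> t0 r0 qI c0.
have [/andP[a0 ar] HH] := astar_spec t0 r0 qI.
move: qI => /andP[q1 q2].
apply/idP/idP => h.
  case: HH => [<-|[a00 rH]]; first exact: Hq_lt.
  exact: le_lt_trans rH (Hq_lt t0 q1 (lexx 0) c0).
rewrite ltNge; apply/negP => ca.
case: HH => [Ha|[a00 _]].
  by have := Hq_le t0 q1 (ltW c0) ca; rewrite Ha leNgt h.
by move: ca; rewrite a00 leNgt c0.
Qed.


Definition box {R : realType} {d : nat} (qs : d.-tuple rat) (k : nat) : set (d.-tuple R) :=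
  [set t | forall i, ball (ratr (tnth qs i) : R) (k.+1%:R^-1) (tnth t i)].

Lemma box_measurable (R : realType) (d : nat) (qs : d.-tuple rat) k :
  measurable (box qs k : set (d.-tuple R)).
Proof.
have -> : (box qs k : set (d.-tuple R)) =
   \bigcap_(i in [set: 'I_d]) ((@tnth d R)^~ i @^-1` ball (ratr (tnth qs i) : R) (k.+1%:R^-1)).
  by apply/seteqP; split => t /= h i; [move=> _; exact: h | exact: h].
apply: fin_bigcap_measurable; first exact: finite_finset.
move=> i _; rewrite -[X in measurable X]setTI.
by apply: measurable_tnth => //; exact: measurable_ball.
Qed.

Lemma open_preimage_measurable (R : realType) (d : nat) (Omega : set 'rV[R]_d) :
  open Omega -> measurable (rv_of_tuple @^-1` Omega : set (d.-tuple R)).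
Proof.
move=> oO.
set D := rv_of_tuple @^-1` Omega.
pose F (n : nat) : set (d.-tuple R) :=
  match @unpickle (d.-tuple rat * nat)%type n with
  | Some (qs, k) => if `[< box qs k `<=` D >] then box qs k else set0
  | None => set0
  end.
have -> : D = \bigcup_n F n.
  apply/seteqP; split; last first.
    move=> t [n _]; rewrite /F; case: (unpickle n) => [[qs k]|//].
    by case: asboolP => [h /h|].
  move=> t Dt.
  have : nbhs (rv_of_tuple t) Omega by exact: oO.
  move=> /nbhs_ballP [e e0 he].
  have [k hk] := ltr_add_invr (y := 0) (x := e / 2) ltac:(by rewrite divr_gt0).
  rewrite add0r in hk.
  have hq : forall i : 'I_d, exists q : rat,
      ball (ratr q : R) (k.+1%:R^-1) (tnth t i).
    move=> i.
    have [q] := @rat_in_itvoo R (tnth t i - k.+1%:R^-1) (tnth t i + k.+1%:R^-1)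
      ltac:(by rewrite ltrBlDr -addrA ltrDl addr_gt0 // invr_gt0).
    rewrite in_itv/= => /andP[h1 h2]; exists q.
    by rewrite /ball /= ltr_norml; apply/andP; split; [rewrite ltrBrDr addrC|rewrite ltrBlDr addrC].
  pose qs := [tuple xget 0%R [set q : rat | ball (ratr q : R) (k.+1%:R^-1) (tnth t i)] | i < d].
  have hqs : forall j, ball (ratr (tnth qs j) : R) (k.+1%:R^-1) (tnth t j).
    move=> j; rewrite /qs tnth_mktuple.
    apply: (@xgetPex _ 0%R [set q : rat | ball (ratr q : R) (k.+1%:R^-1) (tnth t j)]).
    by have [q hq1] := hq j; exists q.
  have sub : box qs k `<=` D.
    move=> y hy; apply: he; rewrite /ball /=; split => // i j.
    rewrite /rv_of_tuple !mxE.
    have := hy j; have := hqs j; rewrite /ball /= => h1 h2.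
    have : `|tnth t j - tnth y j| <= `|tnth t j - ratr (tnth qs j)| + `|ratr (tnth qs j) - tnth y j|.
      by rewrite (le_trans _ (ler_normD _ _))// subrKA.
    rewrite distrC in h1 => h; apply: (le_lt_trans h); rewrite [e]splitr.
    by apply: ltrD; apply: lt_trans hk.
  exists (pickle (qs, k)) => //.
  by rewrite /F pickleK; case: asboolP.
apply: bigcupT_measurable => n; rewrite /F.
case: (unpickle n) => [[qs k]|//].
by case: asboolP => _ //; exact: box_measurable.
Qed.


Lemma mtuple_D (d0 : measure_display) (T : measurableType d0) (R : realType) (n : nat)
  (D : set T) (h : T -> n.-tuple R) (mD : measurable D) :
  (forall i, measurable_fun D (fun x => tnth (h x) i)) -> measurable_fun D h.
Proof.
move=> hi.
apply: (@measurability _ _ _ _ D h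
  (\big[setU/set0]_(i < n) preimage_set_system setT (fun t : n.-tuple R => tnth t i) measurable)).
  by [].
move=> A [B hB <-].
have : exists2 i : 'I_n, True & preimage_set_system setT (fun t : n.-tuple R => tnth t i) measurable B.
  move: hB; rewrite -bigcup_seq => -[i _ hi']; by exists i.
move=> [i _ [C mC <-]]; rewrite setTI -comp_preimage.
exact: hi i mD C mC.
Qed.

Lemma eucl_measurable (R : realType) (m : nat) :
  measurable_fun [set: m.-tuple R] (@eucl R m).
Proof.
rewrite /eucl.
apply: measurableT_comp.
  apply: continuous_measurable_fun. exact: sqrt_continuous.
apply: measurable_sum => i.
apply: measurable_funX.
exact: measurable_tnth.
Qed.

Lemma powR_measurable_D (d0 : measure_display) (T : measurableType d0) (R : realType)
  (D : set T) (u v : T -> R) : measurable D ->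
  measurable_fun D u -> measurable_fun D v -> (forall x, D x -> v x != 0) ->
  measurable_fun D (fun x => powR (u x) (v x)).
Proof.
move=> mD mu mv hv.
apply: (@eq_measurable_fun _ _ _ _ D
   (fun x => if u x == 0 then 0 else expR (v x * ln (u x)))).
  move=> x; rewrite inE => Dx; rewrite /powR; case: ifP => // _.
  by rewrite (negbTE (hv x Dx)).
apply: measurable_fun_if => //.
  by apply: measurable_fun_eqr.
apply: (@measurable_funS _ _ _ _ D) => //.
apply: (@measurableT_comp _ _ _ _ _ _ expR); first exact: measurable_expR.
apply: measurable_funM => //.
apply: (@measurableT_comp _ _ _ _ _ _ (@ln R)) => //; exact: measurable_ln.
Qed.

Lemma astar_measurable (d0 : measure_display) (T : measurableType d0) (R : realType)
  (D : set T) (tau : R) (r q : T -> R) : measurable D -> 0 < tau ->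
  measurable_fun D r -> measurable_fun D q ->
  (forall x, D x -> 0 <= r x) -> (forall x, D x -> 1 <= q x <= 2) ->
  measurable_fun D (fun x => astar tau (r x) (q x)).
Proof.
move=> mD t0 mr mq r0 qI.
apply: (measurability _ (RGenInftyO.measurableE R)).
move=> _ [_ [c ->] <-].
have [c0|c0] := ltP 0 c.
  have -> : D `&` (fun x => astar tau (r x) (q x)) @^-1` `]-oo, c[ =
      D `&` (fun x => r x < Hq tau (q x) c) @^-1` [set true].
    apply/seteqP; split => x [Dx h]; split => //=.
      by move: h; rewrite /= in_itv /= astar_lt// ?r0// ?qI// => ->.
    by move: h => /= h; rewrite in_itv /= astar_lt// ?r0// ?qI//.
  apply: measurable_fun_ltr => //.
  rewrite /Hq; apply: measurable_funD => //.
  apply: measurable_funM; first exact: measurable_funM.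
  apply: (measurableT_comp (measurable_powRr c)).
  exact: measurable_funB.
have -> : D `&` (fun x => astar tau (r x) (q x)) @^-1` `]-oo, c[ = set0.
  apply/seteqP; split => x // [Dx]; rewrite /= in_itv /=.
  have [/andP[a0 _] _] := astar_spec t0 (r0 x Dx) (qI x Dx).
  by move=> h; have := lt_le_trans (le_lt_trans a0 h) c0; rewrite ltxx.
exact: measurable0.
Qed.

Lemma tsub_measurable (d0 : measure_display) (T : measurableType d0) (R : realType) (m : nat)
  (D : set T) (f h : T -> m.-tuple R) : measurable D ->
  measurable_fun D f -> measurable_fun D h -> measurable_fun D (fun x => tsub (f x) (h x)).
Proof.
move=> mD mf mh; apply: mtuple_D => // i.
apply: (@eq_measurable_fun _ _ _ _ D (fun x => tnth (f x) i - tnth (h x) i)).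
  by move=> x _; rewrite /tsub tnth_mktuple.
apply: measurable_funB.
  exact: (measurableT_comp (measurable_tnth i) mf).
exact: (measurableT_comp (measurable_tnth i) mh).
Qed.

Lemma integrand_split (d0 : measure_display) (T : measurableType d0) (R : realType) (m : nat)
  (mu : {measure set T -> \bar R}) (D : set T) (p : T -> R) (tau : R) (f h : T -> m.-tuple R) :
  measurable D -> 0 < tau -> measurable_fun D p -> (forall x, D x -> p x != 0) ->
  measurable_fun D f -> measurable_fun D h ->
  (\int[mu]_(x in D) (powR (eucl (h x)) (p x))%:E +
    ((2 * tau)^-1)%:E * \int[mu]_(x in D) ((eucl (tsub (f x) (h x))) ^+ 2)%:E)%E =
  (\int[mu]_(x in D) (powR (eucl (h x)) (p x) + eucl (tsub (f x) (h x)) ^+ 2 / (2 * tau))%:E)%E.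
Proof.
move=> mD t0 mp pn0 mf mh.
have mA : measurable_fun D (fun x => powR (eucl (h x)) (p x)).
  apply: powR_measurable_D => //.
  exact: (measurableT_comp (@eucl_measurable R m) mh).
have mB : measurable_fun D (fun x => eucl (tsub (f x) (h x)) ^+ 2).
  apply: measurable_funX.
  exact: (measurableT_comp (@eucl_measurable R m) (tsub_measurable mD mf mh)).
rewrite -ge0_integralZl_EFin//; last 3 first.
- by move=> x _; rewrite lee_fin sqr_ge0.
- exact/measurable_EFinP.
- by rewrite invr_ge0 mulr_ge0// ltW.
rewrite -ge0_integralD//.
- by apply: eq_integral => x _; rewrite -EFinM -EFinD mulrC.
- by move=> x _; rewrite lee_fin powR_ge0.
- exact/measurable_EFinP.
- by move=> x _; rewrite -EFinM lee_fin mulr_ge0// ?sqr_ge0// invr_ge0 mulr_ge0// ltW.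
- apply/measurable_EFinP; apply: measurable_funM => //.
Qed.

Unset Implicit Arguments.

Theorem mainTheorem4 (R : realType) (d m : nat)
  (mu : {measure set (d.-tuple R) -> \bar R}) (Hmu : is_lebesgue_Rd mu)
  (Omega : set 'rV[R]_d) (HOopen : open Omega) (HOconn : connected Omega)
  (Hm : (1 <= m)%N)
  (p : d.-tuple R -> R)
  (Hpmeas : measurable_fun (rv_of_tuple @^-1` Omega) p)
  (Hprange : forall x, (rv_of_tuple @^-1` Omega) x -> 1 <= p x <= 2)
  (tau : R) (Htau : 0 < tau)
  (f : d.-tuple R -> m.-tuple R) (Hf : inL2 mu (rv_of_tuple @^-1` Omega) f) :
  moreau_rho mu (rv_of_tuple @^-1` Omega) p tau f =
  (\int[mu]_(x in rv_of_tuple @^-1` Omega) (T_tau tau (f x) (p x))%:E)%E.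
Proof.
set D := rv_of_tuple @^-1` Omega.
have mD : measurable D := open_preimage_measurable HOopen.
have [mf fL2] := Hf.
have pn0 : forall x, D x -> p x != 0.
  by move=> x Dx; have /andP[h _] := Hprange x Dx; rewrite gt_eqF// (lt_le_trans _ h).
have mr : measurable_fun D (fun x => eucl (f x)).
  exact: (measurableT_comp (@eucl_measurable R m) mf).
have mA : measurable_fun D (fun x => astar tau (eucl (f x)) (p x)).
  apply: astar_measurable => //.
  by move=> x _; exact: eucl_ge0.
pose g := fun x => gs tau (f x) (p x).
have mg : measurable_fun D g.
  apply: mtuple_D => // i.
  apply: (@eq_measurable_fun _ _ _ _ D
    (fun x => astar tau (eucl (f x)) (p x) * powR (eucl (f x)) (-1) * tnth (f x) i)).
    move=> x _; rewrite /g /gs /tsc tnth_mktuple powR_inv1 //; exact: eucl_ge0.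
  apply: measurable_funM; last exact: (measurableT_comp (measurable_tnth i) mf).
  apply: measurable_funM => //.
  exact: (measurableT_comp (measurable_powR _) mr).
have gL2 : inL2 mu D g.
  split => //.
  apply: le_lt_trans fL2.
  apply: ge0_le_integral => //.
  - by move=> x _; rewrite lee_fin sqr_ge0.
  - apply/measurable_EFinP; apply: measurable_funX.
    exact: (measurableT_comp (@eucl_measurable R m) mg).
  - by apply/measurable_EFinP; apply: measurable_funX.
  - move=> x Dx; rewrite lee_fin.
    have [-> _] := eucl_gs (f x) Htau (Hprange x Dx).
    have [/andP[a0 ar] _] := astar_spec Htau (eucl_ge0 (f x)) (Hprange x Dx).
    by rewrite ler_sqr// nnegrE// eucl_ge0.
rewrite /moreau_rho.
apply/eqP; rewrite eq_le; apply/andP; split.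
  apply: ereal_inf_lbound; exists g => //.
  rewrite /rho_p /L2sq integrand_split//.
  apply: eq_integral => x; rewrite inE => Dx.
  by rewrite (pointwise_eq (f x) Htau (Hprange x Dx)).
apply: le_ereal_inf_tmp => _ [h [mh _] <-].
rewrite /rho_p /L2sq integrand_split//.
apply: ge0_le_integral => //.
- move=> x Dx; rewrite lee_fin (T_tau_phi (f x) Htau (Hprange x Dx)).
  have [/andP[a0 ar] _] := astar_spec Htau (eucl_ge0 (f x)) (Hprange x Dx).
  by rewrite /phi addr_ge0 ?powR_ge0// divr_ge0 ?sqr_ge0// mulr_ge0// ltW.
- apply/measurable_EFinP.
  apply: (@eq_measurable_fun _ _ _ _ D
    (fun x => phi tau (p x) (eucl (f x)) (astar tau (eucl (f x)) (p x)))).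
    by move=> x; rewrite inE => Dx; rewrite (T_tau_phi (f x) Htau (Hprange x Dx)).
  rewrite /phi; apply: measurable_funD.
    exact: powR_measurable_D.
  apply: measurable_funM; last exact: measurable_cst.
  by apply: measurable_funX; apply: measurable_funB.
- apply/measurable_EFinP; apply: measurable_funD.
    apply: powR_measurable_D => //.
    exact: (measurableT_comp (@eucl_measurable R m) mh).
  apply: measurable_funM => //; apply: measurable_funX.
  exact: (measurableT_comp (@eucl_measurable R m) (tsub_measurable mD mf mh)).
- move=> x Dx; rewrite lee_fin.
  exact: pointwise_lb Htau (Hprange x Dx).
Qed.
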